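(* Let $n\ge1$, $m>1$, $a\in\mathbb{R}^n$, $d\in\mathbb{R}^m$ with $\|d\|\ge\|a\|$, and $S_{\le0}=\{(x,y)\in\mathbb{R}^{n+m}:\|x\|\le\|y\|,\ a^\mathsf{T} x+d^\mathsf{T} y\le0\}$. Let $(\bar x,\bar y)\notin S_{\le0}$ satisfy $a^\mathsf{T}\bar x+d^\mathsf{T}\bar y\le0$ and let $\lambda=\bar x/\|\bar x\|$. Define $G(\lambda)=\{\beta\in\mathbb{R}^m:\|\beta\|=1,\ a^\mathsf{T}\lambda+d^\mathsf{T}\beta\le0\}$ and $C_{G(\lambda)}=\{(x,y):-\lambda^\mathsf{T} x+\beta^\mathsf{T} y\le0\ \forall\beta\in G(\lambda)\}$. Then $C_{G(\lambda)}$ is maximal $S_{\le0}$-free and contains $(\bar x,\bar y)$ in its interior.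
   Context: $\|\cdot\|$ is the Euclidean norm. A convex set $C$ is $S$-free if $\operatorname{int}(C)\cap S=\emptyset$, and maximal $S$-free if it is $S$-free and no $S$-free convex set strictly contains it. (Note $(\bar x,\bar y)\notin S_{\le0}$ together with the linear inequality means $\|\bar x\|>\|\bar y\|$.) *)

(* Defs.v *)
From HB Require Import structures.
From mathcomp Require Import all_boot all_order all_algebra.
From mathcomp Require Import all_classical all_reals all_analysis.
Set Implicit Arguments. Unset Strict Implicit. Unset Printing Implicit Defensive.
Import Order.TTheory GRing.Theory Num.Theory.
Import numFieldNormedType.Exports.
Local Open Scope ring_scope.
Local Open Scope classical_set_scope.

Definition dotv (R : realType) (n : nat) (u v : 'rV[R]_n) : R :=
  \sum_(i < n) u ord0 i * v ord0 i.

Definition enorm (R : realType) (n : nat) (u : 'rV[R]_n) : R :=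
  Num.sqrt (dotv u u).

Definition convex_set (R : realType) (k : nat) (C : set 'rV[R]_k) : Prop :=
  forall x y (t : R), C x -> C y -> 0 <= t -> t <= 1 ->
    C (t *: x + (1 - t) *: y).

Definition S_free (R : realType) (k : nat) (S C : set 'rV[R]_k) : Prop :=
  convex_set C /\ (@interior 'rV[R]_k C) `&` S = set0.

Definition maximal_S_free (R : realType) (k : nat) (S C : set 'rV[R]_k) : Prop :=
  S_free S C /\ (forall C', S_free S C' -> C `<=` C' -> C' = C).

(* Main.v *)
Require Import Defs.
From HB Require Import structures.
From mathcomp Require Import all_boot all_order all_algebra.
From mathcomp Require Import all_classical all_reals all_analysis.
From mathcomp Require Import ring lra.
Import Order.TTheory GRing.Theory Num.Theory.
Import numFieldNormedType.Exports.
Local Open Scope ring_scope.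
Local Open Scope classical_set_scope.
Set Implicit Arguments. Unset Strict Implicit.

Lemma dotvC (R : realType) n (u v : 'rV[R]_n) : dotv u v = dotv v u.
Proof. by rewrite /dotv; apply: eq_bigr => i _; rewrite mulrC. Qed.
Lemma dotvDl (R : realType) n (u v w : 'rV[R]_n) : dotv (u + v) w = dotv u w + dotv v w.
Proof. by rewrite /dotv -big_split; apply: eq_bigr => i _; rewrite mxE mulrDl. Qed.
Lemma dotvZl (R : realType) n k (u v : 'rV[R]_n) : dotv (k *: u) v = k * dotv u v.
Proof. by rewrite /dotv mulr_sumr; apply: eq_bigr => i _; rewrite mxE mulrA. Qed.
Lemma dotvNl (R : realType) n (u v : 'rV[R]_n) : dotv (- u) v = - dotv u v.
Proof. by rewrite /dotv -sumrN; apply: eq_bigr => i _; rewrite mxE mulNr. Qed.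
Lemma dotvBl (R : realType) n (u v w : 'rV[R]_n) : dotv (u - v) w = dotv u w - dotv v w.
Proof. by rewrite dotvDl dotvNl. Qed.
Lemma dotvDr (R : realType) n (u v w : 'rV[R]_n) : dotv w (u + v) = dotv w u + dotv w v.
Proof. by rewrite dotvC dotvDl !(dotvC w). Qed.
Lemma dotvZr (R : realType) n k (u v : 'rV[R]_n) : dotv v (k *: u) = k * dotv v u.
Proof. by rewrite dotvC dotvZl dotvC. Qed.
Lemma dotvNr (R : realType) n (u v : 'rV[R]_n) : dotv v (- u) = - dotv v u.
Proof. by rewrite dotvC dotvNl dotvC. Qed.
Lemma dotvBr (R : realType) n (u v w : 'rV[R]_n) : dotv w (u - v) = dotv w u - dotv w v.
Proof. by rewrite dotvDr dotvNr. Qed.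
Lemma dotv0r (R : realType) n (u : 'rV[R]_n) : dotv u 0 = 0.
Proof. by rewrite /dotv big1 // => i _; rewrite mxE mulr0. Qed.
Lemma dotv0l (R : realType) n (u : 'rV[R]_n) : dotv 0 u = 0.
Proof. by rewrite dotvC dotv0r. Qed.
Lemma dotv_ge0 (R : realType) n (u : 'rV[R]_n) : 0 <= dotv u u.
Proof. by rewrite /dotv; apply: sumr_ge0 => i _; rewrite -expr2 sqr_ge0. Qed.
Lemma enorm_ge0 (R : realType) n (u : 'rV[R]_n) : 0 <= enorm u.
Proof. exact: sqrtr_ge0. Qed.
Lemma enorm_sq (R : realType) n (u : 'rV[R]_n) : enorm u ^+ 2 = dotv u u.
Proof. by rewrite /enorm sqr_sqrtr // dotv_ge0. Qed.
Lemma enorm1P (R : realType) n (u : 'rV[R]_n) : enorm u = 1 <-> dotv u u = 1.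
Proof.
split => h; first by rewrite -enorm_sq h expr1n.
by rewrite /enorm h sqrtr1.
Qed.
Lemma entry_sq (R : realType) n (u : 'rV[R]_n) i : u ord0 i ^+ 2 <= dotv u u.
Proof.
rewrite /dotv (bigD1 i) //= expr2 lerDl.
by apply: sumr_ge0 => j _; rewrite -expr2 sqr_ge0.
Qed.

Lemma CS2 (R : realType) n (u v : 'rV[R]_n) :
  dotv u v ^+ 2 <= dotv u u * dotv v v.
Proof.
set A := dotv u u; set B := dotv u v; set C := dotv v v.
have q t : 0 <= t ^+ 2 * A - 2 * t * B + C.
  have := dotv_ge0 (t *: u - v).
  rewrite !(dotvBl, dotvBr, dotvZl, dotvZr) (dotvC v u) -/A -/B -/C.
  move=> h; nra.
have A0 : 0 <= A by exact: dotv_ge0.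
have [Ap|A0'] := ltP 0 A.
  have := q (B / A).
  have -> : (B / A) ^+ 2 * A - 2 * (B / A) * B + C = (A * C - B ^+ 2) / A.
    by field; rewrite gt_eqF.
  move=> h; have : 0 <= A * C - B ^+ 2.
    by have := mulr_ge0 h (ltW Ap); rewrite divfK ?gt_eqF.
  lra.
have Ae : A = 0 by lra.
have [B0|Bn] := eqVneq B 0; first by rewrite B0 Ae expr2 !mul0r.
have := q ((C + 1) / (2 * B)).
rewrite Ae.
have -> : ((C + 1) / (2 * B)) ^+ 2 * 0 - 2 * ((C + 1) / (2 * B)) * B + C = -1.
  by field.
lra.
Qed.

Lemma CS (R : realType) n (u v : 'rV[R]_n) : dotv u v <= enorm u * enorm v.
Proof.
have h := CS2 u v.
have e1 := enorm_sq u. have e2 := enorm_sq v.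
have g1 := enorm_ge0 u. have g2 := enorm_ge0 v.
have N0 : 0 <= enorm u * enorm v by exact: mulr_ge0.
have : dotv u v ^+ 2 <= (enorm u * enorm v) ^+ 2 by rewrite exprMn e1 e2.
nra.
Qed.

Lemma CSn (R : realType) n (u v : 'rV[R]_n) : - (enorm u * enorm v) <= dotv u v.
Proof.
have := CS (- u) v.
have -> : enorm (- u) = enorm u by rewrite /enorm dotvNl dotvNr opprK.
rewrite dotvNl; lra.
Qed.

Lemma lsubD (R : realType) n m (z1 z2 : 'rV[R]_(n + m)) :
  lsubmx (z1 + z2) = lsubmx z1 + lsubmx z2.
Proof. by apply/matrixP => i j; rewrite !mxE. Qed.
Lemma rsubD (R : realType) n m (z1 z2 : 'rV[R]_(n + m)) :
  rsubmx (z1 + z2) = rsubmx z1 + rsubmx z2.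
Proof. by apply/matrixP => i j; rewrite !mxE. Qed.
Lemma lsubN (R : realType) n m (z : 'rV[R]_(n + m)) : lsubmx (- z) = - lsubmx z.
Proof. by apply/matrixP => i j; rewrite !mxE. Qed.
Lemma rsubN (R : realType) n m (z : 'rV[R]_(n + m)) : rsubmx (- z) = - rsubmx z.
Proof. by apply/matrixP => i j; rewrite !mxE. Qed.
Lemma lsubZ (R : realType) n m k (z : 'rV[R]_(n + m)) : lsubmx (k *: z) = k *: lsubmx z.
Proof. by apply/matrixP => i j; rewrite !mxE. Qed.
Lemma rsubZ (R : realType) n m k (z : 'rV[R]_(n + m)) : rsubmx (k *: z) = k *: rsubmx z.
Proof. by apply/matrixP => i j; rewrite !mxE. Qed.

Lemma entry_le_norm (R : realType) k (z : 'rV[R]_k) i : `|z ord0 i| <= `|z|.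
Proof.
rewrite [leRHS]/Num.Def.normr /= mx_normrE.
by apply: le_trans; last exact: (le_bigmax _ _ (ord0, i)).
Qed.

Lemma abs_le1 (R : realType) n (u : 'rV[R]_n) i : dotv u u = 1 -> `|u ord0 i| <= 1.
Proof.
move=> h; have := entry_sq u i; rewrite h -real_normK ?num_real // => h2.
have := normr_ge0 (u ord0 i); nra.
Qed.

Lemma dot_bound (R : realType) n (u X : 'rV[R]_n) c :
  dotv u u = 1 -> (forall i, `|X ord0 i| <= c) -> `|dotv u X| <= n%:R * c.
Proof.
move=> hu hX; rewrite /dotv; apply: le_trans (ler_norm_sum _ _ _) _.
apply: le_trans (_ : \sum_(i < n) c <= _).
  apply: ler_sum => i _; rewrite normrM.
  have h1 := abs_le1 i hu; have h2 := hX i.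
  have := normr_ge0 (u ord0 i); have := normr_ge0 (X ord0 i); nra.
by rewrite sumr_const card_ord mulr_natl.
Qed.

Definition fb (R : realType) n m (lam : 'rV[R]_n) (beta : 'rV[R]_m) (z : 'rV[R]_(n + m)) :=
  - dotv lam (lsubmx z) + dotv beta (rsubmx z).

Lemma fbB (R : realType) n m (lam : 'rV[R]_n) (beta : 'rV[R]_m) (z1 z2 : 'rV[R]_(n + m)) :
  fb lam beta (z1 - z2) = fb lam beta z1 - fb lam beta z2.
Proof. rewrite /fb lsubD rsubD lsubN rsubN dotvBr dotvBr; ring. Qed.

Lemma fb_bound (R : realType) n m (lam : 'rV[R]_n) (beta : 'rV[R]_m) (v : 'rV[R]_(n + m)) :
  dotv lam lam = 1 -> dotv beta beta = 1 -> `|fb lam beta v| <= (n + m)%:R * `|v|.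
Proof.
move=> hl hb; rewrite /fb.
apply: le_trans (ler_normD _ _) _; rewrite normrN natrD mulrDl.
apply: lerD; [apply: dot_bound => // i | apply: dot_bound => // i];
  rewrite mxE; exact: entry_le_norm.
Qed.

Lemma margin (R : realType) n m (lam : 'rV[R]_n) (W : 'rV[R]_(n + m)) (eps : R) :
  0 < eps -> dotv lam lam = 1 ->
  (forall beta : 'rV[R]_m, dotv beta beta = 1 -> fb lam beta W <= - eps) ->
  exists2 r : R, 0 < r & forall w : 'rV[R]_(n + m), `|W - w| < r ->
    forall beta, dotv beta beta = 1 -> fb lam beta w <= 0.
Proof.
move=> e0 hl hW.
set K : R := (n + m)%:R + 1.
have K0 : 0 < K by rewrite /K; have := ler0n R (n + m); lra.
exists (eps / K); first exact: divr_gt0.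
move=> w hw beta hb.
have e : w = W - (W - w) by rewrite opprB addrC subrK.
rewrite e fbB.
have h1 := hW beta hb.
have h2 := fb_bound (W - w) hl hb.
have h3 : (n + m)%:R * `|W - w| <= eps.
  have : `|W - w| * K < eps by rewrite -ltr_pdivlMr.
  have := normr_ge0 (W - w); rewrite /K; nra.
have := ler_norm (- fb lam beta (W - w)); rewrite normrN; lra.
Qed.

Lemma enorm_gt0 (R : realType) n (v : 'rV[R]_n) : 0 < dotv v v -> 0 < enorm v.
Proof. by move=> h; rewrite /enorm sqrtr_gt0. Qed.

Lemma normalize (R : realType) n (v : 'rV[R]_n) : 0 < dotv v v ->
  dotv ((enorm v)^-1 *: v) ((enorm v)^-1 *: v) = 1.
Proof.
move=> h; have hp := enorm_gt0 h.
rewrite dotvZl dotvZr -enorm_sq; field; by rewrite gt_eqF.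
Qed.

Lemma dot_two (R : realType) m (i0 i1 : 'I_m) (p q : R) (w : 'rV[R]_m) :
  i0 != i1 ->
  dotv (\row_k (if k == i0 then p else if k == i1 then q else 0)) w = p * w ord0 i0 + q * w ord0 i1.
Proof.
move=> ne; rewrite /dotv (bigD1 i0) //= (bigD1 i1) //=; last by rewrite eq_sym.
rewrite big1 ?addr0 => [|k /andP [k1 k0]]; last by rewrite mxE (negbTE k0) (negbTE k1) mul0r.
have ne' : i1 != i0 by rewrite eq_sym.
by rewrite !mxE eqxx (negbTE ne') eqxx.
Qed.

Lemma orth_unit (R : realType) m (hm : (1 < m)%N) (y : 'rV[R]_m) :
  exists e : 'rV[R]_m, dotv e e = 1 /\ dotv e y = 0.
Proof.
have h0 : (0 < m)%N by apply: ltn_trans hm.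
pose i0 : 'I_m := Ordinal h0. pose i1 : 'I_m := Ordinal hm.
have ne : i0 != i1 by [].
pose v : 'rV[R]_m := \row_k (if k == i0 then y ord0 i1 else if k == i1 then - y ord0 i0 else 0).
have vy : dotv v y = 0 by rewrite /v dot_two //; ring.
have [vp|vn] := ltP 0 (dotv v v).
  exists ((enorm v)^-1 *: v); split; first exact: normalize.
  by rewrite dotvZl vy mulr0.
have vv : dotv v v = y ord0 i1 ^+ 2 + y ord0 i0 ^+ 2.
  rewrite /v dot_two // !mxE eqxx.
  have ne' : i1 != i0 by rewrite eq_sym.
  rewrite (negbTE ne') eqxx; ring.
have y0 : y ord0 i0 = 0 by nra.
pose e : 'rV[R]_m := \row_k (if k == i0 then 1 else if k == i1 then 0 else 0).
exists e; split.
  rewrite /e dot_two // !mxE eqxx.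
  have ne' : i1 != i0 by rewrite eq_sym.
  by rewrite (negbTE ne') eqxx; ring.
by rewrite /e dot_two // y0; ring.
Qed.
Lemma sq1 {R : realType} {x : R} : x^+2 = 1 -> x = 1 \/ x = -1.
Proof.
move=> h; have : (x - 1) * (x + 1) = 0.
  have -> : (x - 1) * (x + 1) = x^+2 - 1 by ring.
  by rewrite h subrr.
move/eqP; rewrite mulf_eq0 => /orP [/eqP e|/eqP e]; [left|right]; lra.
Qed.
Lemma core (R : realType) (s V c w al ta : R) :
  s^+2 + V^+2 = 1 -> c^+2 + w^+2 = 1 -> al^+2 + ta^+2 = 1 ->
  0 <= V -> 0 <= w -> 0 <= ta -> c <= al * s + ta * V -> 0 < s + c ->
  s * c - V * w <= al.
Proof.
move=> hs hc ha hV hw hta h1 h3.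
set g := s * c - V * w. set h := V * c + s * w.
have hh : 0 <= h.
  have [s0|s0] := leP 0 s.
    have [c0|c0] := leP 0 c.
      rewrite /h; nra.
    have hwv : V^+2 <= w^+2 by nra.
    have wV : V <= w by nra.
    rewrite /h; nra.
  have c0 : -s < c by lra.
  have hwv : w^+2 <= V^+2 by nra.
  have wV : w <= V by nra.
  rewrite /h; nra.
have hgh : g^+2 + h^+2 = 1.
  have -> : g^+2 + h^+2 = (s^+2 + V^+2) * (c^+2 + w^+2) by rewrite /g /h; ring.
  by rewrite hs hc mulr1.
have ec : c = g * s + h * V.
  have -> : g * s + h * V = c * (s^+2 + V^+2) by rewrite /g /h; ring.
  by rewrite hs mulr1.
have ew : w = h * s - g * V.
  have -> : h * s - g * V = w * (s^+2 + V^+2) by rewrite /g /h; ring.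
  by rewrite hs mulr1.
rewrite leNgt; apply/negP => gal.
have [Q0|Q0] := eqVneq (h + ta) 0.
  have h0 : h = 0 by lra.
  have t0 : ta = 0 by lra.
  rewrite h0 in hgh ec ew; rewrite t0 in ha h1.
  have g2 : g^+2 = 1 by nra.
  have a2 : al^+2 = 1 by nra.
  have [g1|g1] := sq1 g2; have [a1|a1] := sq1 a2; rewrite ?g1 ?a1 in gal; try lra.
  rewrite g1 in ec ew. rewrite a1 in h1.
  nra.
set P := g + al. set Q := h + ta.
have Qp : 0 < Q by rewrite /Q lt0r Q0 /=; lra.
have X1 : 0 <= P * V - Q * s.
  have e1 : (g - al) * (g + al) = (ta - h) * (ta + h).
    have : (g - al) * (g + al) - (ta - h) * (ta + h) = (g^+2 + h^+2) - (al^+2 + ta^+2) by ring.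
    rewrite hgh ha subrr; lra.
  have i1 : (g - al) * s <= (ta - h) * V by nra.
  have i2 : (g - al) * (s * Q) <= (g - al) * (P * V).
    have : (g - al) * (s * Q) = (g - al) * s * Q by ring.
    move=> ->.
    have : (g - al) * s * Q <= (ta - h) * V * Q by nra.
    move=> i3.
    have : (ta - h) * V * Q = (g - al) * (P * V).
      have -> : (ta - h) * V * Q = (ta - h) * (ta + h) * V by rewrite /Q; ring.
      by rewrite -e1 /P; ring.
    lra.
  have gp : 0 < g - al by lra.
  rewrite ler_pM2l // in i2. lra.
have X2 : 0 <= h * s - g * V by rewrite -ew.
have X3 : 0 < g * Q - h * P.
  have e : (g * Q - h * P) * Q = (g - al) * (1 + al * g + h * ta).
    have : (g * Q - h * P) * Q - (g - al) * (1 + al * g + h * ta) = g * (al^+2 + ta^+2 - 1) - al * (g^+2 + h^+2 - 1) by rewrite /Q /P; ring.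
    rewrite hgh ha subrr !mulr0 subrr => e; lra.
  have pos : 0 < 1 + al * g + h * ta.
    have : 2 * (1 + al * g + h * ta) = (g + al)^+2 + Q^+2.
      have : 2 * (1 + al * g + h * ta) - ((g + al)^+2 + Q^+2) = 2 - (g^+2 + h^+2) - (al^+2 + ta^+2) by rewrite /Q; ring.
      rewrite hgh ha => e'; lra.
    nra.
  have : 0 < (g - al) * (1 + al * g + h * ta) by apply: mulr_gt0; lra.
  rewrite -e => hp. 
  rewrite lt0r; apply/andP; split.
    apply/eqP => z; move: hp; rewrite z mul0r; lra.
  rewrite leNgt; apply/negP => n0.
  have : (g * Q - h * P) * Q < 0 by nra.
  lra.
have id : h * (P * V - Q * s) + Q * (h * s - g * V) + V * (g * Q - h * P) = 0 by ring.
have VX : V * (g * Q - h * P) = 0 by nra.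
have V0 : V = 0.
  move: VX => /eqP; rewrite mulf_eq0 => /orP [/eqP //|/eqP e]; lra.
have QX : Q * (h * s - g * V) = 0 by nra.
have X20 : h * s - g * V = 0.
  move: QX => /eqP; rewrite mulf_eq0 => /orP [/eqP e|/eqP //]; lra.
rewrite V0 in hs X20 X1 ec.
have s2 : s^+2 = 1 by lra.
have h0 : h = 0 by nra.
rewrite h0 in X3 ec hgh.
have sm : s = -1 by nra.
have g1 : g = 1 by nra.
rewrite sm g1 in ec h3. lra.
Qed.

Lemma sq_le (R : realType) (p q : R) : 0 <= q -> p ^+ 2 <= q ^+ 2 -> p <= q.
Proof. move=> hq h; nra. Qed.

Lemma key (R : realType) n m (hm : (1 < m)%N) (a lam x : 'rV[R]_n) (d y : 'rV[R]_m) :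
  enorm a <= enorm d -> dotv lam lam = 1 -> enorm x <= enorm y ->
  dotv a x + dotv d y <= 0 ->
  exists beta, dotv beta beta = 1 /\ dotv a lam + dotv d beta <= 0 /\
               dotv lam x <= dotv beta y.
Proof.
move=> had hl hxy hS.
have eL : enorm lam = 1 by apply/enorm1P.
have gA := enorm_ge0 a. have gD := enorm_ge0 d.
have gX := enorm_ge0 x. have gY := enorm_ge0 y.
have sX : dotv lam x <= enorm x by have := CS lam x; rewrite eL mul1r.
have sXn : - enorm x <= dotv lam x by have := CSn lam x; rewrite eL mul1r.
have aL : dotv a lam <= enorm a by have := CS a lam; rewrite eL mulr1.
have aLn : - enorm a <= dotv a lam by have := CSn a lam; rewrite eL mulr1.
have [Dp|D0] := ltP 0 (enorm d); last first.
  have dB b : dotv b b = 1 -> dotv d b <= 0.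
    move=> hb; have := CS d b; rewrite (proj2 (enorm1P b) hb) mulr1; lra.
  have [Yp|Y0] := ltP 0 (enorm y).
    have yy : 0 < dotv y y by rewrite -enorm_sq; exact: exprn_gt0.
    exists ((enorm y)^-1 *: y); split; first exact: normalize.
    split; first by have := dB _ (normalize yy); lra.
    rewrite dotvZl -enorm_sq.
    have -> : (enorm y)^-1 * enorm y ^+ 2 = enorm y by field; rewrite gt_eqF.
    lra.
  have [e [ee ey]] := orth_unit hm y.
  exists e; split => //; split; first by have := dB _ ee; lra.
  rewrite ey; lra.
have [I|II] := lerP (dotv lam x * enorm d) (- dotv d y).
  exists (- (enorm d)^-1 *: d).
  have dd : dotv d d = enorm d ^+ 2 by rewrite enorm_sq.
  split.
    rewrite dotvZl dotvZr dd; field; by rewrite gt_eqF.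
  split.
    rewrite dotvZr dd.
    have -> : - (enorm d)^-1 * enorm d ^+ 2 = - enorm d by field; rewrite gt_eqF.
    lra.
  rewrite dotvZl.
  have -> : - (enorm d)^-1 * dotv d y = (- dotv d y) / enorm d by field; rewrite gt_eqF.
  by rewrite ler_pdivlMr.
set s := dotv lam x in sX sXn II hS *.
set D := enorm d in had gD Dp II *.
set Y := enorm y in hxy gY *.
have Yp : 0 < Y.
  rewrite ltNge; apply/negP => Y0.
  have Y00 : Y = 0 by lra.
  have s0 : s = 0 by lra.
  have dy1 := CS d y. have dy2 := CSn d y.
  rewrite -/D -/Y Y00 mulr0 in dy1 dy2.
  move: II; rewrite s0 mul0r; lra.
have yy : dotv y y = Y ^+ 2 by rewrite enorm_sq.
set yh := Y^-1 *: y.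
have yhyh : dotv yh yh = 1 by rewrite /yh dotvZl dotvZr yy; field; rewrite gt_eqF.
have yhy : dotv yh y = Y by rewrite /yh dotvZl yy; field; rewrite gt_eqF.
set c := dotv d yh.
have cY : dotv d y = c * Y by rewrite /c /yh dotvZr; field; rewrite gt_eqF.
have dd : dotv d d = D ^+ 2 by rewrite enorm_sq.
set dp := d - c *: yh.
have dpyh : dotv dp yh = 0 by rewrite /dp dotvBl dotvZl yhyh -/c; ring.
have ddp : dotv d dp = D ^+ 2 - c ^+ 2 by rewrite /dp dotvBr dotvZr dd -/c; ring.
have dpdp : dotv dp dp = D ^+ 2 - c ^+ 2.
  by rewrite {1}/dp dotvBl dotvZl ddp (dotvC yh) dpyh; ring.
set w := enorm dp.
have w2 : w ^+ 2 = D ^+ 2 - c ^+ 2 by rewrite /w enorm_sq.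
have gw : 0 <= w := enorm_ge0 dp.
have [e [ee [eyh de]]] : exists e, dotv e e = 1 /\ dotv e yh = 0 /\ dotv d e = - w.
  have [wp|w0] := ltP 0 w.
    exists (- w^-1 *: dp); split.
      rewrite dotvZl dotvZr dpdp -w2; field; by rewrite gt_eqF.
    split; first by rewrite dotvZl dpyh mulr0.
    rewrite dotvZr ddp -w2; field; by rewrite gt_eqF.
  have [e [ee eyh]] := orth_unit hm yh.
  exists e; split => //; split => //.
  have w00 : w = 0 by lra.
  have -> : d = dp + c *: yh by rewrite /dp subrK.
  rewrite dotvDl dotvZl (dotvC yh) eyh mulr0 addr0.
  have h1 := CS dp e. have h2 := CSn dp e.
  rewrite -/w w00 mul0r in h1 h2. lra.
have ey : dotv e y = 0.
  have -> : y = Y *: yh by rewrite /yh scalerA mulfV ?gt_eqF // scale1r.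
  by rewrite dotvZr eyh mulr0.
clearbody yh dp.
set u := s / Y.
have u2 : u ^+ 2 <= 1.
  have : s ^+ 2 <= Y ^+ 2 by nra.
  rewrite /u expr_div_n ler_pdivrMr ?mul1r //; exact: exprn_gt0.
set V := Num.sqrt (1 - u ^+ 2).
have V2 : V ^+ 2 = 1 - u ^+ 2 by rewrite /V sqr_sqrtr // subr_ge0.
have gV : 0 <= V := sqrtr_ge0 _.
have V2' : u ^+ 2 + V ^+ 2 = 1 by rewrite V2; ring.
exists (u *: yh + V *: e).
split.
  rewrite !(dotvDl, dotvDr, dotvZl, dotvZr) yhyh ee eyh (dotvC yh) eyh.
  have : u * (u * 1) + u * (V * 0) + (V * (u * 0) + V * (V * 1)) = u ^+ 2 + V ^+ 2 by ring.
  move=> ->; rewrite V2; ring.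
split; last first.
  by rewrite dotvDl !dotvZl yhy ey /u mulr0 addr0 divfK ?gt_eqF.
rewrite dotvDr !dotvZr -/c de.
set al := - dotv a lam.
have alD : al ^+ 2 <= D ^+ 2.
  have : al ^+ 2 <= enorm a ^+ 2 by rewrite /al; nra.
  have : enorm a ^+ 2 <= D ^+ 2 by nra.
  lra.
set al' := al / D.
have al'2 : al' ^+ 2 <= 1 by rewrite /al' expr_div_n ler_pdivrMr ?mul1r //; exact: exprn_gt0.
set ta := Num.sqrt (1 - al' ^+ 2).
have ta2 : ta ^+ 2 = 1 - al' ^+ 2 by rewrite /ta sqr_sqrtr // subr_ge0.
have gta : 0 <= ta := sqrtr_ge0 _.
set ap := a - dotv a lam *: lam.
set xp := x - s *: lam.
have E1 : dotv a x = dotv a lam * s + dotv ap xp.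
  rewrite /ap /xp !(dotvBl, dotvBr, dotvZl, dotvZr) hl -/s ?(dotvC lam a); ring.
have E2 : dotv ap ap = enorm a ^+ 2 - al ^+ 2.
  rewrite /ap /al !(dotvBl, dotvBr, dotvZl, dotvZr) hl enorm_sq ?(dotvC lam a); ring.
have E3 : dotv xp xp = enorm x ^+ 2 - s ^+ 2.
  rewrite /xp !(dotvBl, dotvBr, dotvZl, dotvZr) hl enorm_sq -/s (dotvC x lam) -/s; ring.
have P1 : enorm ap <= D * ta.
  apply: sq_le; first exact: mulr_ge0.
  rewrite enorm_sq E2 exprMn ta2 /al' expr_div_n.
  have -> : D ^+ 2 * (1 - al ^+ 2 / D ^+ 2) = D ^+ 2 - al ^+ 2 by field; rewrite gt_eqF.
  have : enorm a ^+ 2 <= D ^+ 2 by nra.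
  lra.
have P2 : enorm xp <= Y * V.
  apply: sq_le; first exact: mulr_ge0.
  rewrite enorm_sq E3 exprMn V2 /u expr_div_n.
  have -> : Y ^+ 2 * (1 - s ^+ 2 / Y ^+ 2) = Y ^+ 2 - s ^+ 2 by field; rewrite gt_eqF.
  have : enorm x ^+ 2 <= Y ^+ 2 by nra.
  lra.
have P3 : - dotv ap xp <= (D * ta) * (Y * V).
  have := CSn ap xp. have := enorm_ge0 ap. have := enorm_ge0 xp.
  have : enorm ap * enorm xp <= (D * ta) * (Y * V).
    apply: ler_pM => //; exact: enorm_ge0.
  lra.
have H7 : c * Y <= al * s + D * ta * (Y * V).
  rewrite -cY; move: hS; rewrite E1 /al; lra.
have DY : 0 < D * Y by exact: mulr_gt0.
have H2 : (c / D) ^+ 2 + (w / D) ^+ 2 = 1.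
  rewrite !expr_div_n w2; field; by rewrite gt_eqF.
have H3 : al' ^+ 2 + ta ^+ 2 = 1 by rewrite ta2; ring.
have H5 : 0 <= w / D by apply: divr_ge0; lra.
have H7' : c / D <= al' * u + ta * V.
  have -> : al' * u + ta * V = (al * s + D * ta * (Y * V)) / (D * Y).
    rewrite /al' /u; field; by rewrite (gt_eqF Yp) (gt_eqF Dp).
  have -> : c / D = (c * Y) / (D * Y).
    field; by rewrite (gt_eqF Yp) (gt_eqF Dp).
  by rewrite ler_pM2r ?invr_gt0.
have H8 : 0 < u + c / D.
  have -> : u + c / D = (s * D + c * Y) / (D * Y).
    rewrite /u; field; by rewrite (gt_eqF Yp) (gt_eqF Dp).
  apply: divr_gt0 => //; rewrite -cY; lra.
have Hc := core V2' H2 H3 gV H5 gta H7' H8.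
have : u * c - V * w <= al.
  have -> : u * c - V * w = (u * (c / D) - V * (w / D)) * D by field; rewrite gt_eqF.
  have -> : al = al' * D by rewrite /al'; field; rewrite gt_eqF.
  by rewrite ler_pM2r.
rewrite /al; lra.
Qed.

Lemma int_of_ball (R : realType) k (A : set 'rV[R]_k) (W : 'rV[R]_k) (r : R) :
  0 < r -> (forall w, `|W - w| < r -> A w) -> interior A W.
Proof.
move=> r0 h; rewrite /interior; apply/nbhs_ballP; exists r => // w.
by rewrite -ball_normE /ball_ => /h.
Qed.

Lemma ball_of_int (R : realType) k (A : set 'rV[R]_k) (W : 'rV[R]_k) :
  interior A W -> exists2 r : R, 0 < r & forall w, `|W - w| < r -> A w.
Proof.
rewrite /interior => /nbhs_ballP [r r0 h]; exists r => // w hw; apply: h.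
by rewrite -ball_normE /ball_.
Qed.

Lemma fb_comb (R : realType) n m (lam : 'rV[R]_n) (beta : 'rV[R]_m) (x y : 'rV[R]_(n + m)) t s :
  fb lam beta (t *: x + s *: y) = t * fb lam beta x + s * fb lam beta y.
Proof. rewrite /fb lsubD rsubD !lsubZ !rsubZ !(dotvDr, dotvZr); ring. Qed.

Lemma fb_row (R : realType) n m (lam u : 'rV[R]_n) (beta v : 'rV[R]_m) :
  fb lam beta (row_mx u v) = - dotv lam u + dotv beta v.
Proof. by rewrite /fb row_mxKl row_mxKr. Qed.


Unset Implicit Arguments.
Theorem proposition3 (R : realType) (n m : nat) (hn : (1 <= n)%N)
  (hm : (1 < m)%N) (a : 'rV[R]_n) (d : 'rV[R]_m)
  (had : enorm a <= enorm d) (xb : 'rV[R]_n) (yb : 'rV[R]_m) :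
  let S := [set z : 'rV[R]_(n + m) |
             enorm (lsubmx z) <= enorm (rsubmx z) /\
             dotv a (lsubmx z) + dotv d (rsubmx z) <= 0] in
  ~ S (row_mx xb yb) ->
  dotv a xb + dotv d yb <= 0 ->
  let lam := (enorm xb)^-1 *: xb in
  let G := [set beta : 'rV[R]_m |
             enorm beta = 1 /\ dotv a lam + dotv d beta <= 0] in
  let C := [set z : 'rV[R]_(n + m) |
             forall beta, G beta ->
               - dotv lam (lsubmx z) + dotv beta (rsubmx z) <= 0] in
  maximal_S_free S C /\ @interior 'rV[R]_(n + m) C (row_mx xb yb).
Proof.
move=> S HnS Hlin lam G C.
have xy : enorm yb < enorm xb.
  rewrite ltNge; apply/negP => h; apply: HnS.
  by rewrite /S /= row_mxKl row_mxKr; split.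
have X0 : 0 < enorm xb by have := enorm_ge0 yb; lra.
have xx : 0 < dotv xb xb by rewrite -enorm_sq; exact: exprn_gt0.
have hl : dotv lam lam = 1 by exact: normalize.
have lamx : dotv lam xb = enorm xb.
  rewrite /lam dotvZl -enorm_sq; field; by rewrite gt_eqF.
clearbody lam.
have CP z : (forall beta : 'rV[R]_m, dotv beta beta = 1 -> fb lam beta z <= 0) -> C z.
  move=> h beta [/enorm1P hb _]; exact: h.
have Hint : interior C (row_mx xb yb).
  have [r r0 hr] := @margin R n m lam (row_mx xb yb) (enorm xb - enorm yb) ltac:(lra) hl
    ltac:(move=> beta hb; rewrite fb_row lamx;
          have := CS beta yb; rewrite (proj2 (enorm1P beta) hb) mul1r; lra).
  apply: (int_of_ball r0) => w hw; apply: CP; exact: hr.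
split => //.
have Hfree : S_free S C.
  split.
    move=> x y t Cx Cy t0 t1 beta Gb.
    have := fb_comb lam beta x y t (1 - t); rewrite /fb => ->.
    have := Cx beta Gb; have := Cy beta Gb; nra.
  apply/seteqP; split => z // [Hi [HS1 HS2]].
  have [r r0 hr] := ball_of_int Hi.
  have [beta [hb [hG hy]]] := key hm had hl HS1 HS2.
  set v : 'rV[R]_(n + m) := row_mx 0 (- beta).
  have nv : 0 <= `|v| := normr_ge0 v.
  set k := r / (2 * (`|v| + 1)).
  have k0 : 0 < k by rewrite /k; apply: divr_gt0 => //; lra.
  have kv : k * `|v| < r.
    rewrite /k mulrAC ltr_pdivrMr; last by lra.
    nra.
  have : C (z - k *: v).
    apply: hr; rewrite opprB addrC subrK normrZ gtr0_norm //.
  move=> /(_ beta (conj (proj2 (enorm1P beta) hb) hG)).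
  have := fb_comb lam beta z v 1 (- k).
  rewrite scale1r scaleNr /fb => ->.
  rewrite /v row_mxKl row_mxKr dotv0r dotvNr hb.
  rewrite /fb in hy; lra.
split => // C' HC' sub.
apply/seteqP; split; last exact: sub.
move=> p Cp'; apply: contrapT => nCp.
have [beta0 [Gb0 dp]] : exists beta0, G beta0 /\ 0 < fb lam beta0 p.
  apply: contrapT => hne; apply: nCp => beta Gb.
  rewrite leNgt; apply/negP => hlt; apply: hne; exists beta; split => //.
have hb0 : dotv beta0 beta0 = 1 by apply/enorm1P; case: Gb0.
set dl := fb lam beta0 p in dp *.
set P := enorm (rsubmx p).
set sc := P ^+ 2 / dl + 1.
have sc0 : 0 < sc.
  have : 0 <= P ^+ 2 / dl by apply: divr_ge0; [exact: sqr_ge0 | lra].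
  rewrite /sc; lra.
have scdl : sc * dl = P ^+ 2 + dl by rewrite /sc; field; rewrite gt_eqF.
set v0 : 'rV[R]_(n + m) := row_mx lam beta0.
set z := (sc / 2) *: v0.
have Sz : S z.
  rewrite /S /z /v0 /= lsubZ rsubZ row_mxKl row_mxKr; split.
    by rewrite /enorm !(dotvZl, dotvZr) hl hb0.
  rewrite !dotvZr -mulrDr; apply: mulr_ge0_le0; first by apply: divr_ge0; lra.
  by case: Gb0.
have gP : 0 <= P := enorm_ge0 _.
have marg : forall beta : 'rV[R]_m, dotv beta beta = 1 -> fb lam beta (sc *: v0 - p) <= - (dl / 2).
  move=> beta hb.
  have e1 : sc *: v0 - p = sc *: v0 + (-1) *: p by rewrite scaleN1r.
  rewrite e1 fb_comb /v0 fb_row hl.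
  have e2 : fb lam beta p = dl + dotv (beta - beta0) (rsubmx p).
    by rewrite /dl /fb dotvBl; ring.
  rewrite e2.
  set u := enorm (beta - beta0).
  have u2 : u ^+ 2 = 2 - 2 * dotv beta beta0.
    by rewrite /u enorm_sq !(dotvBl, dotvBr) hb hb0 (dotvC beta0 beta); ring.
  have cs := CSn (beta - beta0) (rsubmx p).
  rewrite -/u -/P in cs.
  have gu : 0 <= u := enorm_ge0 _.
  have kq : 0 <= sc * u ^+ 2 - 2 * u * P + dl.
    have e3 : sc * (sc * u ^+ 2 - 2 * u * P + dl) = (sc * u - P) ^+ 2 + dl.
      have : sc * (sc * u ^+ 2 - 2 * u * P + dl) - ((sc * u - P) ^+ 2 + dl) = sc * dl - P ^+ 2 - dl by ring.
      rewrite scdl; move=> h; lra.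
    have : 0 <= sc * (sc * u ^+ 2 - 2 * u * P + dl) by rewrite e3; have := sqr_ge0 (sc * u - P); lra.
    by rewrite pmulr_rge0.
  have e4 : sc * dotv beta beta0 = sc - sc * u ^+ 2 / 2.
    have -> : dotv beta beta0 = 1 - u ^+ 2 / 2 by rewrite u2; field.
    ring.
  have : sc * (-1 + dotv beta beta0) + -1 * (dl + dotv (beta - beta0) (rsubmx p))
       = - (sc * u ^+ 2) / 2 - dl - dotv (beta - beta0) (rsubmx p).
    by rewrite mulrDr e4; field.
  move=> ->.
  have : - (u * P) <= dotv (beta - beta0) (rsubmx p) by [].
  lra.
have [r r0 hr] := @margin R n m lam (sc *: v0 - p) (dl / 2) ltac:(lra) hl marg.
have IC' : interior C' z.
  apply: (@int_of_ball R (n + m) C' z (r / 2)); first lra.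
  move=> w hw.
  have Cw2 : C (2 *: w - p).
    apply: CP; apply: hr.
    have -> : sc *: v0 - p - (2 *: w - p) = 2 *: (z - w).
      rewrite /z scalerBr scalerA.
      have -> : 2 * (sc / 2) = sc by field.
      by rewrite opprB addrA subrK.
    rewrite normrZ ger0_norm; last lra.
    lra.
  have := (proj1 HC') (2 *: w - p) p (1 / 2) (sub _ Cw2) Cp' ltac:(lra) ltac:(lra).
  have -> : 1 / 2 *: (2 *: w - p) + (1 - 1 / 2) *: p = w.
    rewrite scalerBr scalerA.
    have -> : 1 / 2 * 2 = 1 :> R by field.
    have -> : 1 - 1 / 2 = 1 / 2 :> R by field.
    by rewrite scale1r subrK.
  by [].
have : (interior C' `&` S) z by split.
by rewrite (proj2 HC').
Qed.
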